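(* For every $n\ge1$ (of either parity), the permutation representation of $S_n$ over $\mathbb{C}$ arising from the action of $S_n$ (by $\pi\cdot S=\pi(S)$) on the set of odd-sized subsets of $\{1,\dots,n\}$ does not unite conjugacy classes.
   Context: A representation $T$ of $G$ unites conjugacy classes if there are non-conjugate $\sigma,\tau\in G$ with $T(\sigma),T(\tau)$ similar matrices. *)

(* Defs.v *)
From mathcomp Require Import all_boot all_order all_algebra all_fingroup all_field.
Set Implicit Arguments. Unset Strict Implicit. Unset Printing Implicit Defensive.
Import GRing.Theory Num.Theory.
Local Open Scope ring_scope.

Definition odd_subsets (n : nat) : {set {set 'I_n}} :=
  [set S : {set 'I_n} | odd #|S|].

(* Basis indexed by 'I_#|odd_subsets n| via
   enum_val; T(s) maps basis vector e_S to e_{s(S)}, i.e. the (i,j) entry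
   is 1 iff s(S_j) = S_i  (column convention). *)
Definition perm_rep_odd (n : nat) (s : 'S_n) :
  'M[algC]_(#|odd_subsets n|) :=
  \matrix_(i, j) ((s @: (enum_val j : {set 'I_n}) == enum_val i)%:R).

Definition similar_mx (k : nat) (A B : 'M[algC]_k) : Prop :=
  exists P : 'M[algC]_k, P \in unitmx /\ B = invmx P *m A *m P.

(* Main.v *)
Require Import Defs.
From mathcomp Require Import all_boot all_order all_algebra all_fingroup all_field.
Set Implicit Arguments. Unset Strict Implicit. Unset Printing Implicit Defensive.

Definition per (T : finType) (u : {perm T}) x := #|porbit u x|.
Local Open Scope group_scope.

Lemma per_gt0 (T : finType) (u : {perm T}) x : 0 < per u x.
Proof. by rewrite lt0n card_porbit_neq0. Qed.

Lemma perX_per (T : finType) (u : {perm T}) x : (u ^+ per u x)%g x = x.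
Proof. by rewrite permX iter_porbit. Qed.

Lemma perX_mod (T : finType) (u : {perm T}) x i :
  (u ^+ i) x = (u ^+ (i %% per u x)) x.
Proof.
rewrite {1}(divn_eq i (per u x)) expgD permM; congr ((u ^+ _) _).
elim: (i %/ per u x) => [|k IH]; first by rewrite mul0n expg0 perm1.
by rewrite mulSn expgD permM perX_per.
Qed.

Lemma perX_inj (T : finType) (u : {perm T}) x i j :
  i < per u x -> j < per u x -> (u ^+ i) x = (u ^+ j) x -> i = j.
Proof.
move=> hi hj; rewrite !permX => e.
have U := uniq_traject_porbit u x.
rewrite -(nth_traject u hi) -(nth_traject u hj) in e.
by apply/eqP; rewrite -(nth_uniq x _ _ U) ?size_traject // e.
Qed.

Lemma perX_eq (T : finType) (u : {perm T}) x i j :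
  ((u ^+ i) x == (u ^+ j) x) = (i == j %[mod per u x]).
Proof.
rewrite (perX_mod u x i) (perX_mod u x j).
apply/eqP/eqP => [e|->//].
by apply: perX_inj e; rewrite ltn_mod per_gt0.
Qed.

Lemma perX_fix (T : finType) (u : {perm T}) x i :
  ((u ^+ i) x == x) = (per u x %| i).
Proof.
by rewrite -{2}[x]perm1 -(expg0 u) perX_eq mod0n.
Qed.

Lemma coprime_divg p j : 0 < p -> coprime (p %/ gcdn p j) (j %/ gcdn p j).
Proof.
move=> hp; have g0 : 0 < gcdn p j by rewrite gcdn_gt0 hp.
rewrite /coprime -(eqn_pmul2r g0) muln_gcdl !divnK ?dvdn_gcdl ?dvdn_gcdr //.
by rewrite mul1n.
Qed.

Lemma dvdn_mul_gcd p j i : 0 < p -> (p %| j * i) = (p %/ gcdn p j %| i).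
Proof.
move=> hp; have g0 : 0 < gcdn p j by rewrite gcdn_gt0 hp.
have -> : (j * i = (j %/ gcdn p j * i) * gcdn p j)%N.
  by rewrite mulnAC divnK ?dvdn_gcdr.
rewrite -{1}(divnK (dvdn_gcdl p j)) dvdn_pmul2r //.
by rewrite Gauss_dvdr // coprime_divg.
Qed.

Lemma dvdn_antiP a b : (forall i, (a %| i) = (b %| i)) -> a = b.
Proof. by move=> H; apply/eqP; rewrite eqn_dvd -H dvdnn H dvdnn. Qed.

Lemma per_exp (T : finType) (u : {perm T}) x j :
  per (u ^+ j) x = per u x %/ gcdn (per u x) j.
Proof.
apply: dvdn_antiP => i.
by rewrite -perX_fix -expgM perX_fix dvdn_mul_gcd // per_gt0.
Qed.

Lemma per_leq (T : finType) (u : {perm T}) x : per u x <= #|T|.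
Proof. exact: max_card. Qed.

Local Close Scope group_scope.

Lemma inv_iter (T : finType) (u : {perm T}) (A : {set T}) x i :
  (forall z, z \in A -> u z \in A) -> x \in A -> (u ^+ i)%g x \in A.
Proof.
move=> hA hx; elim: i => [|i IH]; first by rewrite expg0 perm1.
by rewrite expgSr permM hA.
Qed.

Lemma porbit_subA (T : finType) (u : {perm T}) (A : {set T}) x :
  (forall z, z \in A -> u z \in A) -> x \in A -> porbit u x \subset A.
Proof. by move=> hA hx; apply/subsetP => z /porbitP [i ->]; apply: inv_iter. Qed.

Lemma per_porbit (T : finType) (u : {perm T}) x z :
  z \in porbit u x -> per u z = per u x.
Proof. by rewrite -eq_porbit_mem /per => /eqP ->. Qed.

Lemma porbit_step (T : finType) (u : {perm T}) x z :
  (u z \in porbit u x) = (z \in porbit u x).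
Proof.
have -> : u z = (u ^+ 1)%g z by rewrite expg1.
by rewrite -!eq_porbit_mem porbit_perm.
Qed.

Definition idx (T : finType) (u : {perm T}) x z :=
  index z (traject u x (per u x)).

Lemma idxP (T : finType) (u : {perm T}) x z : z \in porbit u x ->
  idx u x z < per u x /\ (u ^+ idx u x z)%g x = z.
Proof.
move=> hz; rewrite porbit_traject in hz.
have hi : idx u x z < per u x by rewrite /idx -{2}(size_traject u x (per u x)) index_mem.
split=> //; by rewrite permX -(nth_traject u hi) nth_index.
Qed.

Lemma build (T : finType) (s t : {perm T}) n : forall A B : {set T},
  #|A| <= n -> (forall x, x \in A -> s x \in A) -> (forall y, y \in B -> t y \in B) ->
  (forall l, #|[set x in A | per s x == l]| = #|[set y in B | per t y == l]|) ->
  exists g : T -> T, [/\ {in A &, injective g}, forall x, x \in A -> g x \in B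
     & forall x, x \in A -> g (s x) = t (g x)].
Proof.
elim: n => [|n IH] A B hA sA tB hc.
  move: hA; rewrite leqn0 cards_eq0 => /eqP ->.
  by exists id; split => // x; rewrite inE.
have [->|[x xA]] := set_0Vmem A.
  by exists id; split => // x; rewrite inE.
pose l := per s x.
have : 0 < #|[set y in B | per t y == l]|.
  by rewrite -hc card_gt0; apply/set0Pn; exists x; rewrite inE xA eqxx.
rewrite card_gt0 => /set0Pn [y]; rewrite inE => /andP [yB /eqP yl].
pose O := porbit s x; pose O' := porbit t y.
have OA : O \subset A by apply: porbit_subA.
have OB : O' \subset B by apply: porbit_subA.
pose A' := A :\: O; pose B' := B :\: O'.
have hA' : #|A'| <= n.
  rewrite -ltnS; apply: leq_trans hA; apply: proper_card.
  apply/properP; split; first exact: subsetDl.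
  by exists x => //; rewrite inE porbit_id.
have sA' : forall z, z \in A' -> s z \in A'.
  by move=> z; rewrite !inE porbit_step => /andP [-> /sA ->].
have tB' : forall z, z \in B' -> t z \in B'.
  by move=> z; rewrite !inE porbit_step => /andP [-> /tB ->].
have cA : forall m, #|[set z in A | per s z == m]| =
    #|[set z in A' | per s z == m]| + (m == l) * l.
  move=> m; rewrite -(cardsID O) addnC; congr (_ + _).
    by apply: eq_card => z; rewrite !inE andbA.
  case: eqP => [->|ne]; rewrite ?mul1n ?mul0n.
    rewrite /l /per -/O; apply: eq_card => z; rewrite !inE.
    case zO : (z \in O); rewrite ?andbF // andbT.
    by rewrite (subsetP OA) //=; apply/eqP; exact: (per_porbit zO).
  apply/eqP; rewrite cards_eq0; apply/eqP/setP => z; rewrite !inE.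
  case zO : (z \in O); rewrite ?andbF // andbT.
  by rewrite (per_porbit zO); apply/andP => -[_ /eqP e]; apply: ne.
have cB : forall m, #|[set z in B | per t z == m]| =
    #|[set z in B' | per t z == m]| + (m == l) * l.
  move=> m; rewrite -(cardsID O') addnC; congr (_ + _).
    by apply: eq_card => z; rewrite !inE andbA.
  case: eqP => [->|ne]; rewrite ?mul1n ?mul0n.
    rewrite -yl /per -/O'; apply: eq_card => z; rewrite !inE.
    case zO : (z \in O'); rewrite ?andbF // andbT.
    by rewrite (subsetP OB) //=; apply/eqP; exact: (per_porbit zO).
  apply/eqP; rewrite cards_eq0; apply/eqP/setP => z; rewrite !inE.
  case zO : (z \in O'); rewrite ?andbF // andbT.
  by rewrite (per_porbit zO) yl; apply/andP => -[_ /eqP e]; apply: ne.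
have hc' : forall m, #|[set z in A' | per s z == m]| = #|[set z in B' | per t z == m]|.
  by move=> m; apply/eqP; rewrite -(eqn_add2r ((m == l) * l)) -cA -cB hc.
have [g' [g'inj g'B g's]] := IH A' B' hA' sA' tB' hc'.
pose h z := (t ^+ idx s x z)%g y.
have hO' : forall z, h z \in O' by move=> z; apply: mem_porbit.
have key : forall z1 z2, z1 \in O -> z2 \in O ->
    (h z1 == h z2) = (idx s x z1 == idx s x z2 %[mod l]).
  by move=> z1 z2 _ _; rewrite /h perX_eq yl.
have hinj : {in O &, injective h}.
  move=> z1 z2 h1 h2 /eqP; rewrite key // -perX_eq.
  by have [_ ->] := idxP h1; have [_ ->] := idxP h2; move/eqP.
have hs : forall z, z \in O -> h (s z) = t (h z).
  move=> z zO; have zO' : s z \in O by rewrite porbit_step.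
  apply/eqP; rewrite /h -permM -expgSr perX_eq yl -/l -perX_eq.
  have [_ ->] := idxP zO'; by rewrite expgSr permM; have [_ ->] := idxP zO.
exists (fun z => if z \in O then h z else g' z); split.
- move=> z1 z2 h1 h2 /=.
  case e1 : (z1 \in O); case e2 : (z2 \in O).
  + exact: hinj.
  + have : g' z2 \in B' by apply: g'B; rewrite inE e2.
    by move=> hb he; move: hb; rewrite -he inE hO'.
  + have : g' z1 \in B' by apply: g'B; rewrite inE e1.
    by move=> hb he; move: hb; rewrite he inE hO'.
  + by apply: g'inj; rewrite inE ?e1 ?e2.
- move=> z zA /=; case: ifP => zO; first exact: (subsetP OB).
  by have := g'B z; rewrite !inE zO zA => /(_ isT) /andP [].
- move=> z zA /=; rewrite porbit_step; case: ifP => zO; first exact: hs.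
  by apply: g's; rewrite inE zO.
Qed.

Lemma conj_of_counts (T : finType) (s t : {perm T}) :
  (forall l, #|[set x | per s x == l]| = #|[set y | per t y == l]|) ->
  exists g : {perm T}, t = (s ^ g)%g.
Proof.
move=> hc0.
have hc : forall l, #|[set x in [set: T] | per s x == l]| = #|[set y in [set: T] | per t y == l]|.
  move=> l; rewrite (eq_card (B := [set x | per s x == l])); last by move=> z; rewrite !inE.
  by rewrite hc0; apply: eq_card => z; rewrite !inE.
have [g [ginj _ gs]] := @build T s t #|T| setT setT (max_card _)
  (fun _ _ => in_setT _) (fun _ _ => in_setT _) hc.
have gi : injective g by move=> a b; apply: ginj; rewrite in_setT.
exists (perm gi); apply/permP => y.
rewrite conjgE !permM; set z := ((perm gi)^-1)%g y.
have -> : y = perm gi z by rewrite /z permKV.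
by rewrite !permE gs ?in_setT.
Qed.

Definition togl (X : finType) (O0 : X) (Q : {set X}) :=
  if O0 \in Q then Q :\ O0 else O0 |: Q.

Lemma toglK (X : finType) (O0 : X) : involutive (togl O0).
Proof.
move=> Q; rewrite /togl; case h: (O0 \in Q).
  by rewrite setD11 setD1K.
by rewrite setU11 setU1K ?h.
Qed.

Lemma odd_togl (X : finType) (w : X -> nat) O0 Q : odd (w O0) ->
  odd (\sum_(O in togl O0 Q) w O) = ~~ odd (\sum_(O in Q) w O).
Proof.
move=> hw; rewrite /togl; case: ifP => h.
  rewrite [in RHS](bigD1 O0) //= oddD hw /= negbK; congr (odd _).
  by apply: eq_bigl => O; rewrite !inE andbC.
rewrite (bigD1 O0) ?setU11 //= oddD hw /=; congr (~~ odd _).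
apply: eq_bigl => O; rewrite !inE; case: eqP => [->|] /=; by rewrite ?h ?andbT.

Qed.

Lemma even_sum (X : finType) (w : X -> nat) (Q : {set X}) :
  (forall O, O \in Q -> ~~ odd (w O)) -> ~~ odd (\sum_(O in Q) w O).
Proof.
move=> H; apply: (big_ind (fun m => ~~ odd m)) => //.
by move=> a b ha hb; rewrite oddD (negbTE ha) (negbTE hb).
Qed.

Lemma odd_count (X : finType) (P : {set X}) (w : X -> nat) :
  #|[set Q in powerset P | odd (\sum_(O in Q) w O)]| =
  if [exists O in P, odd (w O)] then 2 ^ (#|P|.-1) else 0.
Proof.
case: existsP => [[O0 /andP [O0P hO0]]|no]; last first.
  apply/eqP; rewrite cards_eq0; apply/eqP/setP => Q; rewrite !inE.
  case QP: (Q \subset P) => //=; apply/negbTE; apply: even_sum => O OQ.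
  apply/negP => ho; apply: no; exists O; rewrite ho andbT.
  by move/subsetP: QP; apply.
set E := [set Q in powerset P | odd _].
set E' := [set Q in powerset P | ~~ odd (\sum_(O in Q) w O)].
have tP : forall Q : {set X}, Q \subset P -> togl O0 Q \subset P.
  move=> Q; rewrite /togl; case: ifP => _ h.
    exact: subset_trans (subsetDl _ _) h.
  by rewrite subUset sub1set O0P h.
have EE' : togl O0 @: E = E'.
  apply/setP => Q; apply/imsetP/idP.
    move=> [Q' Q'E ->]; move: Q'E; rewrite !inE odd_togl // negbK.
    by move=> /andP [/tP -> ->].
  rewrite !inE => /andP [QP hQ]; exists (togl O0 Q); last by rewrite toglK.
  by rewrite !inE tP //= odd_togl.
have cE : #|E| = #|E'| by rewrite -EE' card_imset //; apply: can_inj (toglK O0).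
have sum2 : #|E| + #|E'| = 2 ^ #|P|.
  rewrite -card_powerset -(cardsID [set Q : {set X} | odd (\sum_(O in Q) w O)] (powerset P)).
  congr (_ + _); apply: eq_card => Q; rewrite !inE /= // andbC //.
have P0 : 0 < #|P| by rewrite card_gt0; apply/set0Pn; exists O0.
move: sum2; rewrite -cE -(prednK P0) expnS addnn -mul2n => /eqP.
by rewrite eqn_pmul2l // => /eqP.
Qed.

Lemma porbit_eq (T : finType) (u : {perm T}) a z :
  z \in porbit u a -> porbit u z = porbit u a.
Proof. by rewrite -eq_porbit_mem => /eqP. Qed.

Lemma triv_porbits (T : finType) (u : {perm T}) : trivIset (porbits u).
Proof.
apply/trivIsetP => _ _ /imsetP [a _ ->] /imsetP [b _ ->] ne.
rewrite -setI_eq0; apply: contraR ne => /set0Pn [z]; rewrite inE => /andP [za zb].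
by rewrite -(porbit_eq za) -(porbit_eq zb).
Qed.

Lemma imset_fixE (T : finType) (u : {perm T}) (S : {set T}) :
  (u @: S == S) = (u @: S \subset S).
Proof. by rewrite eqEcard card_imset ?leqnn ?andbT //; apply: perm_inj. Qed.

Lemma cover_inv (T : finType) (u : {perm T}) (Q : {set {set T}}) :
  Q \subset porbits u -> u @: cover Q \subset cover Q.
Proof.
move=> QP; apply/subsetP => _ /imsetP [z /bigcupP [O OQ zO] ->].
apply/bigcupP; exists O => //.
have := subsetP QP O OQ => /imsetP [a _ Oa]; rewrite Oa in zO *.
by rewrite porbit_step.
Qed.

Lemma fixed_cover (T : finType) (u : {perm T}) (S : {set T}) :
  u @: S \subset S -> S = cover [set O in porbits u | O \subset S].
Proof.
move=> hS; have sS : forall z, z \in S -> u z \in S.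
  by move=> z zS; apply: (subsetP hS); apply: imset_f.
apply/setP => z; apply/idP/bigcupP.
  move=> zS; exists (porbit u z); last exact: porbit_id.
  by rewrite inE imset_f //= porbit_subA.
by move=> [O]; rewrite inE => /andP [_ /subsetP]; apply.
Qed.

Lemma cover_inj (T : finType) (u : {perm T}) (Q1 Q2 : {set {set T}}) :
  Q1 \subset porbits u -> Q2 \subset porbits u -> cover Q1 = cover Q2 -> Q1 = Q2.
Proof.
have H : forall Q1 Q2 : {set {set T}}, Q1 \subset porbits u -> Q2 \subset porbits u ->
    cover Q1 = cover Q2 -> Q1 \subset Q2.
  move=> R1 R2 h1 h2 e; apply/subsetP => O OR.
  have := subsetP h1 O OR => /imsetP [a _ Oa].
  have : a \in cover R2 by rewrite -e; apply/bigcupP; exists O => //; rewrite Oa porbit_id.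
  move=> /bigcupP [O2 O2R aO2].
  have := subsetP h2 O2 O2R => /imsetP [b _ O2b].
  by move: aO2; rewrite O2b => aO2; rewrite Oa (porbit_eq aO2) -O2b.
by move=> h1 h2 e; apply/eqP; rewrite eqEsubset (H Q1 Q2) ?(H Q2 Q1).
Qed.

Lemma card_cover_porbits (T : finType) (u : {perm T}) (Q : {set {set T}}) :
  Q \subset porbits u -> #|cover Q| = \sum_(O in Q) #|O|.
Proof.
move=> QP; apply/eqP; rewrite (leq_card_cover Q).2.
exact: trivIsetS QP (triv_porbits u).
Qed.

Definition Fodd (T : finType) (u : {perm T}) :=
  #|[set S : {set T} | odd #|S| & u @: S == S]|.

Lemma FoddE (T : finType) (u : {perm T}) :
  Fodd u = if [exists x, odd (per u x)] then 2 ^ (#|porbits u|.-1) else 0.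
Proof.
set E := [set Q in powerset (porbits u) | odd (\sum_(O in Q) #|O|)].
have -> : [exists x, odd (per u x)] = [exists O in porbits u, odd #|O|].
  apply/existsP/existsP => [[x hx]|[O /andP [/imsetP [x _ ->] hx]]].
    by exists (porbit u x); rewrite imset_f.
  by exists x.
rewrite -odd_count -/E /Fodd.
have -> : [set S : {set T} | odd #|S| & u @: S == S] = cover @: E.
  apply/setP => S; rewrite inE; apply/andP/imsetP.
    move=> [hS]; rewrite imset_fixE => /fixed_cover eS.
    exists [set O in porbits u | O \subset S] => //.
    rewrite !inE; apply/andP; split; first by apply/subsetP => O; rewrite inE => /andP [].
    by rewrite -(@card_cover_porbits _ u) -?eS //; apply/subsetP => O; rewrite inE => /andP [].
  move=> [Q]; rewrite !inE => /andP [QP hQ] ->.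
  by rewrite (@card_cover_porbits _ u) // hQ imset_fixE cover_inv.
apply: card_in_imset => Q1 Q2; rewrite !inE => /andP [h1 _] /andP [h2 _].
exact: (@cover_inj _ u).
Qed.

Import GRing.Theory Num.Theory.
Local Open Scope ring_scope.

Lemma cover_porbits (T : finType) (u : {perm T}) : cover (porbits u) = setT.
Proof.
apply/setP => x; rewrite inE; apply/bigcupP; exists (porbit u x).
  exact: imset_f.
exact: porbit_id.
Qed.

Lemma porbits_sum (T : finType) (u : {perm T}) :
  (#|porbits u|)%:R = \sum_x 1 / (per u x)%:R :> algC.
Proof.
rewrite (eq_bigl (fun x => x \in cover (porbits u))); last first.
  by move=> x; rewrite cover_porbits inE.
rewrite big_trivIset ?triv_porbits //.
rewrite -sum1_card natr_sum; apply: eq_bigr => _ /imsetP [a _ ->].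
rewrite (eq_bigr (fun _ => 1 / (#|porbit u a|)%:R)); last first.
  by move=> z za; rewrite (per_porbit za).
set k := #|porbit u a|.
have k0 : (k%:R : algC) != 0 by rewrite pnatr_eq0 card_porbit_neq0.
by rewrite sumr_const div1r -(mulr_natr (k%:R^-1) k) mulVf.
Qed.

From mathcomp Require Import cyclic zify.
Import GRing.Theory Num.Theory.

Lemma sum_by_val (T : finType) (p : T -> nat) (N : nat) (f : nat -> algC) :
  (forall x, p x <= N)%N ->
  \sum_x f (p x) = \sum_(m < N.+1) (#|[set x | p x == m]|)%:R * f m.
Proof.
move=> hp.
rewrite (partition_big (fun x => (inord (p x) : 'I_N.+1)) predT) //=.
apply: eq_bigr => m _.
have E : forall x, (inord (p x) == m :> 'I_N.+1) = (p x == m).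
  by move=> x; rewrite -val_eqE /= inordK // ltnS.
rewrite (eq_bigr (fun _ => f m)); last by move=> x /eqP <-; rewrite inordK // ltnS.
rewrite sumr_const mulr_natl; congr (_ *+ _).
by apply: eq_card => x; rewrite !inE -E.

Qed.

Lemma totient_gcd (m j N : nat) : (0 < m)%N -> (m <= N)%N ->
  \sum_(d < N.+1 | (d %| j)%N && (d %| m)%N) (totient d)%:R = (gcdn m j)%:R :> algC.
Proof.
move=> m0 mN; have g0 : (0 < gcdn m j)%N by rewrite gcdn_gt0 m0.
rewrite -{1}(sum_totient_dvd (gcdn m j)) natr_sum.
rewrite (@big_ord_widen_cond _ _ _ (gcdn m j).+1 N.+1 (fun d => d %| gcdn m j)%N (fun d => (totient d)%:R : algC)); last first.
  by rewrite ltnS; apply: leq_trans mN; apply: dvdn_leq m0 (dvdn_gcdl m j).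
apply: eq_bigl => d; rewrite dvdn_gcd andbC.
case h : ((d %| m) && (d %| j))%N => //=.
by rewrite ltnS dvdn_leq // dvdn_gcd h.
Qed.

Lemma inv_counts (T : finType) (p q : T -> nat) (N : nat) :
  (forall x, 0 < p x <= N)%N -> (forall x, 0 < q x <= N)%N ->
  (forall j, (0 < j)%N -> \sum_x (gcdn (p x) j)%:R / (p x)%:R
                         = \sum_x (gcdn (q x) j)%:R / (q x)%:R :> algC) ->
  forall m, #|[set x | p x == m]| = #|[set x | q x == m]|.
Proof.
move=> hp hq H.
have hpN : forall x, (p x <= N)%N by move=> x; case/andP: (hp x).
have hqN : forall x, (q x <= N)%N by move=> x; case/andP: (hq x).
pose a m : algC := (#|[set x | p x == m]|)%:R - (#|[set x | q x == m]|)%:R.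
have e0 : forall (r : T -> nat), (forall x, 0 < r x)%N -> #|[set x | r x == 0%N]| = 0%N.
  move=> r hr; apply/eqP; rewrite cards_eq0; apply/eqP/setP => x; rewrite !inE.
  by apply/negbTE; rewrite -lt0n hr.
have a0 : a 0%N = 0.
  by rewrite /a !e0 ?subrr // => x; [case/andP: (hq x) | case/andP: (hp x)].
have HA : forall j, (0 < j)%N -> \sum_(m < N.+1) a m * ((gcdn m j)%:R / m%:R) = 0.
  move=> j j0; have := H j j0.
  have Sp := sum_by_val (fun m => (gcdn m j)%:R / m%:R) hpN.
  have Sq := sum_by_val (fun m => (gcdn m j)%:R / m%:R) hqN.
  rewrite /= in Sp Sq; rewrite Sp Sq => /eqP; rewrite -subr_eq0 -sumrB => /eqP E.
  rewrite -[X in _ = X]E.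
  by apply: eq_bigr => m _; rewrite /a mulrBl.
pose B (d : nat) := \sum_(m < N.+1 | (d %| m)%N) a m / m%:R.
have HB : forall j, (0 < j)%N ->
    \sum_(d < N.+1 | (d %| j)%N) (totient d)%:R * B d = 0.
  move=> j j0; rewrite -[X in _ = X](HA j j0).
  rewrite (eq_bigr (fun d : 'I_N.+1 => \sum_(m < N.+1 | (d %| m)%N)
      (totient d)%:R * (a m / m%:R))); last by move=> d _; rewrite mulr_sumr.
  rewrite (exchange_big_dep predT); last by [].
  apply: eq_bigr => m _.
  rewrite -mulr_suml.
  have [m0|m0] := posnP m.
    by rewrite m0 a0 !mul0r mulr0.
  rewrite (totient_gcd j m0); first exact: mulrCA.
  by rewrite -ltnS ltn_ord.
have HB0 : forall k j, (j < k)%N -> (0 < j)%N -> (j <= N)%N -> B j = 0.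
  elim=> [//|k IH] j jk j0 jN.
  have := HB j j0; rewrite (bigD1 (inord j)) /= ?inordK ?dvdnn ?ltnS //.
  rewrite big1 ?addr0.
    move/eqP; rewrite mulf_eq0 pnatr_eq0 eqn0Ngt totient_gt0 j0 /=.
    by move/eqP.
  move=> d /andP [dj dne].
  have dj' : val d != j by apply: contra dne => /eqP e; apply/eqP/val_inj; rewrite /= inordK ?ltnS // e.
  have d0 : (0 < d)%N by rewrite lt0n; apply: contraL dj => /eqP ->; rewrite dvd0n -lt0n j0.
  have dlt : (d < j)%N by rewrite ltn_neqAle dj' dvdn_leq.
  rewrite IH ?mulr0 //; first exact: leq_trans dlt _.
  by apply: leq_trans jN; apply: ltnW.
have HA0 : forall k l, (N - l < k)%N -> (0 < l)%N -> (l <= N)%N -> a l = 0.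
  elim=> [//|k IH] l lk l0 lN.
  have : B l = 0 by apply: (HB0 l.+1).
  rewrite /B (bigD1 (inord l)) /= ?inordK ?dvdnn ?ltnS // big1 ?addr0.
    move/eqP; rewrite mulf_eq0 invr_eq0 pnatr_eq0 eqn0Ngt l0 orbF.
    by move/eqP.
  move=> m /andP [lm mne].
  have ml' : val m != l by apply: contra mne => /eqP e; apply/eqP/val_inj; rewrite /= inordK ?ltnS // e.
  have [m0|m0] := posnP m; first by rewrite m0 a0 mul0r.
  have lm' : (l < m)%N by rewrite ltn_neqAle eq_sym ml' dvdn_leq.
  have mN : (m <= N)%N by rewrite -ltnS.
  rewrite (IH m) ?mul0r //; lia.
move=> m; have [m0|m0] := posnP m.
  by rewrite m0 !e0 // => x; [case/andP: (hq x) | case/andP: (hp x)].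
have [mN|mN] := leqP m N.
  have : a m = 0 by apply: (HA0 (N - m).+1).
  by move/eqP; rewrite subr_eq0 eqr_nat => /eqP.
have eN : forall (r : T -> nat), (forall x, r x <= N)%N -> #|[set x | r x == m]| = 0%N.
  move=> r hr; apply/eqP; rewrite cards_eq0; apply/eqP/setP => x; rewrite !inE.
  by apply/negbTE; rewrite neq_ltn (leq_ltn_trans (hr x) mN).
by rewrite !eN.
Qed.

Import GRing.Theory Num.Theory.

Lemma rep_mul (n : nat) (u v : 'S_n) :
  perm_rep_odd u *m perm_rep_odd v = perm_rep_odd (v * u)%g.
Proof.
apply/matrixP => i j; rewrite !mxE.
have -> : \sum_k perm_rep_odd u i k * perm_rep_odd v k j =
    \sum_(S in odd_subsets n) (u @: S == enum_val i)%:R * (v @: enum_val j == S)%:R.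
  by rewrite [RHS]big_enum_val; apply: eq_bigr => k _; rewrite !mxE.
have hv : v @: enum_val j \in odd_subsets n.
  have := enum_valP j; rewrite !inE card_imset //; exact: perm_inj.
rewrite (bigD1 _ hv) /= eqxx mulr1 big1 ?addr0.
  congr ((_ == _)%:R); rewrite -imset_comp; apply: eq_imset => x.
  by rewrite permM.
by move=> S /andP [_ hS]; rewrite [_ == S]eq_sym (negbTE hS) mulr0.

Qed.

Lemma rep1 (n : nat) : perm_rep_odd (1%g : 'S_n) = 1%:M.
Proof.
apply/matrixP => i j; rewrite !mxE.
have -> : (1%g : 'S_n) @: enum_val j = enum_val j.
  by rewrite -[RHS]imset_id; apply: eq_imset => x; rewrite perm1.
by rewrite (inj_eq enum_val_inj) eq_sym.
Qed.

Lemma rep_exp (n : nat) (u : 'S_n) k :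
  perm_rep_odd u ^+ k = perm_rep_odd (u ^+ k)%g.
Proof.
elim: k => [|k IH]; first by rewrite expr0 expg0 rep1.
by rewrite exprS IH [in LHS]/GRing.mul /= rep_mul expgSr.
Qed.

Lemma sim_exp (m : nat) (A B : 'M[algC]_m) k :
  similar_mx A B -> \tr (B ^+ k) = \tr (A ^+ k).
Proof.
move=> [P [hP ->]].
have E : (invmx P *m A *m P) ^+ k = invmx P *m (A ^+ k) *m P.
  elim: k => [|k IH].
    by rewrite !expr0 mulmx1 mulVmx.
  rewrite exprS IH [in LHS]/GRing.mul /= !mulmxA -[invmx P *m A *m P *m invmx P]mulmxA.
  by rewrite mulmxV // mulmx1 exprS [in RHS]/GRing.mul /= !mulmxA.
by rewrite E mxtrace_mulC mulmxA mulmxV // mul1mx.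
Qed.

Lemma tr_rep (n : nat) (u : 'S_n) : \tr (perm_rep_odd u) = (Fodd u)%:R.
Proof.
rewrite /mxtrace (eq_bigr (fun i : 'I_#|odd_subsets n| => (u @: (enum_val i : {set 'I_n}) == enum_val i)%:R)); last first.
  by move=> i _; rewrite mxE.
rewrite -(big_enum_val (A := mem (odd_subsets n)) (fun S : {set 'I_n} => (u @: S == S)%:R)).
rewrite /Fodd -sum1_card natr_sum [RHS]big_mkcond [LHS]big_mkcond /=.
apply: eq_bigr => S _; rewrite !inE; by case: (_ == _); case: (odd _).
Qed.

Local Close Scope ring_scope.

Import GRing.Theory Num.Theory.

Lemma odd_pow (T : finType) (u : {perm T}) E xs :
  logn 2 (per u xs) = E -> (forall x, E <= logn 2 (per u x)) ->
  forall k, [exists x, odd (per (u ^+ k)%g x)] = (2 ^ E %| k).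
Proof.
move=> hxs hE k.
apply/existsP/idP => [[x]|hk]; first rewrite per_exp => hx.
  have p0 := per_gt0 u x.
  have hp : 2 ^ E %| per u x by rewrite pfactor_dvdn.
  have cp : coprime (2 ^ E) (per u x %/ gcdn (per u x) k).
    by apply: coprimeXl; rewrite coprime2n.
  have : 2 ^ E %| gcdn (per u x) k.
    by rewrite -(Gauss_dvdr _ cp) divnK ?dvdn_gcdl.
  by move/dvdn_trans; apply; apply: dvdn_gcdr.
exists xs; rewrite per_exp; case: (boolP (odd _)) => // h2; rewrite -dvdn2 in h2.
have p0 := per_gt0 u xs.
have hg : 2 ^ E %| gcdn (per u xs) k by rewrite dvdn_gcd hk andbT pfactor_dvdn // hxs.
have : 2 ^ E.+1 %| per u xs.
  by rewrite -(divnK (dvdn_gcdl (per u xs) k)) expnSr mulnC dvdn_mul.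
by rewrite pfactor_dvdn // hxs ltnn.
Qed.

Lemma porbits_gt0 (T : finType) (u : {perm T}) (x0 : T) : 0 < #|porbits u|.
Proof. by rewrite card_gt0; apply/set0Pn; exists (porbit u x0); apply: imset_f. Qed.

Lemma minE (T : finType) (u : {perm T}) (x0 : T) :
  exists E, exists xs, logn 2 (per u xs) = E /\ (forall x, E <= logn 2 (per u x)).
Proof.
have ex : exists e, [exists x, logn 2 (per u x) == e] by exists (logn 2 (per u x0)); apply/existsP; exists x0.
case: (ex_minnP ex) => E /existsP [xs /eqP hxs] hmin.
exists E, xs; split => // x; apply: hmin; apply/existsP; exists x; by [].
Qed.

Theorem theorem3p10 (n : nat) (hn : (0 < n)%N) (s t : 'S_n) :
  similar_mx (perm_rep_odd s) (perm_rep_odd t) ->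
  exists g : 'S_n, t = (s ^ g)%g.
Proof.
move=> hsim; pose x0 : 'I_n := Ordinal hn.
have hF : forall k, Fodd (s ^+ k)%g = Fodd (t ^+ k)%g.
  move=> k; have := sim_exp k hsim; rewrite !rep_exp !tr_rep => /eqP.
  by rewrite eqr_nat eq_sym => /eqP.
have hOdd : forall k, [exists x, odd (per (s ^+ k)%g x)] = [exists x, odd (per (t ^+ k)%g x)].
  move=> k; move: (hF k); rewrite !FoddE; do 2 case: ifP => //.
    by move=> _ _ /eqP; rewrite expn_eq0.
  by move=> _ _ /esym /eqP; rewrite expn_eq0.
have hc : forall k, [exists x, odd (per (s ^+ k)%g x)] ->
    #|porbits (s ^+ k)%g| = #|porbits (t ^+ k)%g|.
  move=> k hk; have := hF k; rewrite !FoddE -hOdd hk => /(expnI (isT : 1 < 2)) e.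
  by rewrite -(prednK (porbits_gt0 _ x0)) -[RHS](prednK (porbits_gt0 _ x0)) e.
have [Es [xs [hxs hEs]]] := minE s x0.
have [Et [xt [hxt hEt]]] := minE t x0.
have eE : Es = Et.
  apply: (expnI (isT : 1 < 2)); apply: dvdn_antiP => k.
  by rewrite -(odd_pow hxs hEs) -(odd_pow hxt hEt) hOdd.
pose K := 2 ^ Es.
have K0 : 0 < K by rewrite expn_gt0.
have Kp : forall x, K %| per s x by move=> x; rewrite pfactor_dvdn ?per_gt0.
have Kq : forall x, K %| per t x by move=> x; rewrite /K eE pfactor_dvdn ?per_gt0.
pose p' x := per s x %/ K; pose q' x := per t x %/ K.
have bnd : forall (u : 'S_n), (forall x, K %| per u x) -> forall x, 0 < per u x %/ K <= n.
  move=> u hu x; rewrite divn_gt0 // dvdn_leq ?per_gt0 //=.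
  apply: leq_trans (leq_div _ _) _; apply: leq_trans (per_leq _ _) _.
  by rewrite card_ord.
have key : forall (u : 'S_n) j, (forall x, K %| per u x) ->
    ((#|porbits (u ^+ (K * j))%g|)%:R = \sum_x (gcdn (per u x %/ K) j)%:R / (per u x %/ K)%:R :> algC)%R.
  move=> u j hu; rewrite porbits_sum; apply: eq_bigr => x _.
  rewrite per_exp -{1 2}(divnK (hu x)) [_ * K]mulnC -muln_gcdr divnMl //.
  by rewrite natf_div ?dvdn_gcdl // div1r invf_div.
have hsum : forall j, 0 < j -> (\sum_x (gcdn (p' x) j)%:R / (p' x)%:R
                         = \sum_x (gcdn (q' x) j)%:R / (q' x)%:R :> algC)%R.
  move=> j j0; rewrite /p' /q' -!key //.
  have := hc (K * j); rewrite (odd_pow hxs hEs) dvdn_mulr // => /(_ isT) ->.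
  by [].
have hcnt := inv_counts (bnd s Kp) (bnd t Kq) hsum.
apply: conj_of_counts => l.
have [Kl|Kl] := boolP (K %| l).
  transitivity #|[set x | p' x == l %/ K]|.
    apply: eq_card => x; rewrite !inE /p'.
    by rewrite -{1}(divnK (Kp x)) -{1}(divnK Kl) eqn_pmul2r.
  rewrite hcnt; apply: eq_card => x; rewrite !inE /q'.
  by rewrite -[in RHS](divnK (Kq x)) -{2}(divnK Kl) eqn_pmul2r.
have e0 : forall (u : 'S_n), (forall x, K %| per u x) -> #|[set x | per u x == l]| = 0.
  move=> u hu; apply/eqP; rewrite cards_eq0; apply/eqP/setP => x; rewrite !inE.
  by apply/negP => /eqP e; move: Kl; rewrite -e hu.
by rewrite !e0.
Qed.
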